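(* For every hereditary graph class $\mathscr{C}$ of bounded shrubdepth there exists a first-order sentence $\varphi_{\mathscr{C}}$ (over the signature of graphs with one binary adjacency relation) such that for every graph $G$, $G\in\mathscr{C}$ if and only if $G\models\varphi_{\mathscr{C}}$.
   Context: All graphs are finite, simple, undirected. A class is hereditary if closed under taking induced subgraphs. A tree-model of a graph $G$ consists of a finite label set $\Lambda$, a labelling $\lambda:V(G)\to\Lambda$, a rooted tree $T$ with leaf set $V(G)$, and for each non-leaf node $t$ a symmetric $M_t:\Lambda\times\Lambda\to\{0,1\}$, such that distinct $u,v$ are adjacent iff $M_t(\lambda(u),\lambda(v))=1$ for $t$ the lowest common ancestor of $u,v$ in $T$. A class $\mathscr{C}$ has bounded shrubdepth if there are $d,m\in\mathbb{N}$ such that every graph of $\mathscr{C}$ has a tree-model of depth at most $d$ using at most $m$ labels. *)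

(* Defs.v *)
From mathcomp Require Import all_boot.
Set Implicit Arguments. Unset Strict Implicit. Unset Printing Implicit Defensive.

Record graph := Graph {
  vert : finType;
  adj : rel vert;
  adj_sym : symmetric adj;
  adj_irr : irreflexive adj }.

Definition graph_class := graph -> Prop.

(* Hereditary: closed under taking induced subgraphs (i.e. under induced
   embeddings, which in particular includes isomorphic copies). *)
Definition hereditary (C : graph_class) : Prop :=
  forall (G H : graph) (f : vert H -> vert G),
    injective f ->
    (forall x y, @adj H x y = @adj G (f x) (f y)) ->
    C G -> C H.

Inductive tree (V : Type) (m : nat) : Type :=
| Leaf of V
| Node of ('I_m -> 'I_m -> bool) & seq (tree V m).
Arguments Leaf {V m}.
Arguments Node {V m}.

Section Trees.
Variables (V : eqType) (m : nat).

Fixpoint depth (t : tree V m) : nat :=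
  match t with
  | Leaf _ => 0
  | Node _ cs => (foldr maxn 0 (map depth cs)).+1
  end.

Fixpoint leaves (t : tree V m) : seq V :=
  match t with
  | Leaf v => [:: v]
  | Node _ cs => flatten (map leaves cs)
  end.

Fixpoint matrices_sym (t : tree V m) : bool :=
  match t with
  | Leaf _ => true
  | Node M cs => [forall a, forall b, M a b == M b a] && all matrices_sym cs
  end.

(* tadj lam t u v : the adjacency determined by the tree-model, i.e.
   M_t(lam u, lam v) for t the lowest common ancestor of u and v:
   if some child contains both u and v, recurse into it; otherwise, if both
   are leaves below the current node, this node is their lca. *)
Fixpoint tadj (lam : V -> 'I_m) (t : tree V m) (u v : V) : bool :=
  match t with
  | Leaf _ => false
  | Node M cs =>
      has (fun c => [&& u \in leaves c, v \in leaves c & tadj lam c u v]) cs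
      || [&& u \in flatten (map leaves cs), v \in flatten (map leaves cs),
             ~~ has (fun c => (u \in leaves c) && (v \in leaves c)) cs
           & M (lam u) (lam v)]
  end.
End Trees.

Definition has_tree_model (G : graph) (d m : nat) : Prop :=
  exists (lam : vert G -> 'I_m) (t : tree (vert G) m),
    [/\ depth t <= d,
        perm_eq (leaves t) (enum (vert G)),
        matrices_sym t &
        forall u v : vert G, u != v -> @adj G u v = tadj lam t u v].

Definition bounded_shrubdepth (C : graph_class) : Prop :=
  exists d m : nat, forall G, C G -> has_tree_model G d m.

(* First-order logic over the signature {E} of graphs, de Bruijn variables. *)
Inductive formula : Type :=
| FAdj of nat & nat
| FEq of nat & nat
| FNot of formula
| FAnd of formula & formula
| FOr of formula & formula
| FEx of formula
| FAll of formula.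

Fixpoint closed_at (n : nat) (phi : formula) : bool :=
  match phi with
  | FAdj i j | FEq i j => (i < n) && (j < n)
  | FNot p => closed_at n p
  | FAnd p q | FOr p q => closed_at n p && closed_at n q
  | FEx p | FAll p => closed_at n.+1 p
  end.

Definition sentence (phi : formula) : bool := closed_at 0 phi.

Fixpoint sat (G : graph) (env : seq (vert G)) (phi : formula) : Prop :=
  match phi with
  | FAdj i j =>
      match onth env i, onth env j with
      | Some x, Some y => @adj G x y
      | _, _ => False
      end
  | FEq i j =>
      match onth env i, onth env j with
      | Some x, Some y => x = y
      | _, _ => False
      end
  | FNot p => ~ sat env p
  | FAnd p q => sat env p /\ sat env q
  | FOr p q => sat env p \/ sat env q
  | FEx p => exists x : vert G, sat (x :: env) p
  | FAll p => forall x : vert G, sat (x :: env) p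
  end.

Definition models (G : graph) (phi : formula) : Prop := sat (G:=G) [::] phi.

(* Main.v *)
Require Import Defs.
From mathcomp Require Import all_boot zify.
From Stdlib Require Import Classical ClassicalEpsilon FunctionalExtensionality.
Set Implicit Arguments. Unset Strict Implicit. Unset Printing Implicit Defensive.

Definition good {A} (R : A -> A -> Prop) (f : nat -> A) :=
  exists i j, i < j /\ R (f i) (f j).
Definition wqo {A} (P : A -> Prop) (R : A -> A -> Prop) :=
  forall f : nat -> A, (forall n, P (f n)) -> good R f.
Definition trans_rel {A} (R : A -> A -> Prop) :=
  forall x y z, R x y -> R y z -> R x z.

Lemma choice_fun A B (Q : A -> B -> Prop) :
  (forall x, exists y, Q x y) -> exists g : A -> B, forall x, Q x (g x).
Proof.
move=> H; exists (fun x => proj1_sig (constructive_indefinite_description _ (H x))).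
move=> x; exact: proj2_sig (constructive_indefinite_description _ (H x)).
Qed.

Lemma min_nat (Q : nat -> Prop) : (exists n, Q n) ->
  exists n, Q n /\ forall m, Q m -> n <= m.
Proof.
case=> n Qn; elim: n {-2}n (leqnn n) Qn => [|N IH] n.
  rewrite leqn0 => /eqP -> Q0; exists 0; split => //.
move=> nN Qn; case: (classic (exists m, m < n /\ Q m)) => [[m [mn Qm]]|H].
  apply: (IH m) => //; rewrite -ltnS; exact: leq_trans mn nN.
exists n; split => // m Qm; rewrite leqNgt; apply/negP => mn; apply: H; by exists m.
Qed.

Lemma incr_lt (phi : nat -> nat) : (forall k, phi k < phi k.+1) ->
  forall k l, k < l -> phi k < phi l.
Proof.
move=> H k l; elim: l => // l IH; rewrite ltnS leq_eqVlt => /orP [/eqP->|/IH h].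
  exact: H.
exact: ltn_trans h (H l).
Qed.

Lemma incr_ge (phi : nat -> nat) : (forall k, phi k < phi k.+1) -> forall k, k <= phi k.
Proof. move=> H; elim=> // k IH; exact: leq_ltn_trans IH (H k). Qed.

Lemma chain_trans A (R : A -> A -> Prop) (g : nat -> A) : trans_rel R ->
  (forall k, R (g k) (g k.+1)) -> forall k l, k < l -> R (g k) (g l).
Proof.
move=> tR H k l; elim: l => // l IH; rewrite ltnS leq_eqVlt => /orP [/eqP->|/IH h].
  exact: H.
exact: tR h (H l).
Qed.

Lemma subseq_sel (Q : nat -> Prop) : (forall N, exists i, N <= i /\ Q i) ->
  exists phi : nat -> nat, (forall k, phi k < phi k.+1) /\ forall k, Q (phi k).
Proof.
move=> H; have [c Hc] := choice_fun H.
exists (fix phi k := match k with 0 => c 0 | k'.+1 => c (phi k').+1 end); split.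
- move=> k /=; exact: (proj1 (Hc _)).
- case=> [|k] /=; exact: (proj2 (Hc _)).
Qed.

Lemma wqo_chain A (P : A -> Prop) R f : wqo P R -> (forall n, P (f n)) ->
  exists phi : nat -> nat, (forall k, phi k < phi k.+1) /\
     forall k, R (f (phi k)) (f (phi k.+1)).
Proof.
move=> W Pf.
have [N HN] : exists N, forall i, N <= i -> exists j, i < j /\ R (f i) (f j).
  apply: NNPP => Hn.
  have H1 : forall N, exists i, N <= i /\ forall j, i < j -> ~ R (f i) (f j).
    move=> N; apply: NNPP => H2; apply: Hn; exists N => i Ni.
    apply: NNPP => H3; apply: H2; exists i; split=> // j ij Rij; apply: H3; by exists j.
  have [psi [Hps Hq]] := subseq_sel H1.
  have [i [j [ij Rij]]] := W (fun k => f (psi k)) (fun k => Pf _).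
  exact: Hq i (psi j) (incr_lt Hps ij) Rij.
have [nx Hnx] : exists nx : nat -> nat, forall i, N <= i -> i < nx i /\ R (f i) (f (nx i)).
  apply: (choice_fun (Q := fun i j => N <= i -> i < j /\ R (f i) (f j))) => i; case: (leqP N i) => Ni.
    by have [j Hj] := HN i Ni; exists j.
  by exists 0.
pose phi := fix phi k := match k with 0 => N | k'.+1 => nx (phi k') end.
have Nphi : forall k, N <= phi k.
  elim=> //= k IH; exact: leq_trans IH (ltnW (proj1 (Hnx _ IH))).
exists phi; split => k; exact: (proj1 (Hnx _ (Nphi k))) || exact: (proj2 (Hnx _ (Nphi k))).
Qed.

Lemma wqo_inter A (P : A -> Prop) R1 R2 : wqo P R1 -> trans_rel R1 -> wqo P R2 ->
  wqo P (fun x y => R1 x y /\ R2 x y).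
Proof.
move=> W1 t1 W2 f Pf; have [phi [Hp Hc]] := wqo_chain W1 Pf.
have [i [j [ij R2ij]]] := W2 (fun k => f (phi k)) (fun k => Pf _).
exists (phi i), (phi j); split; first exact: (incr_lt Hp ij).
split => //; exact: (chain_trans (g := fun k => f (phi k)) t1 Hc ij).
Qed.

Lemma wqo_map A B (P : A -> Prop) (P' : B -> Prop) R (g : B -> A) :
  wqo P R -> (forall x, P' x -> P (g x)) -> wqo P' (fun x y => R (g x) (g y)).
Proof. move=> W H f Pf; exact: W (fun n => g (f n)) (fun n => H _ (Pf n)). Qed.

Lemma wqo_mono A (P P' : A -> Prop) (R R' : A -> A -> Prop) :
  wqo P R -> (forall x, P' x -> P x) -> (forall x y, R x y -> R' x y) -> wqo P' R'.
Proof.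
move=> W HP HR f Pf; have [i [j [ij Rij]]] := W f (fun n => HP _ (Pf n)).
by exists i, j; split => //; apply: HR.
Qed.

Lemma wqo_fin A (K : finType) (kf : A -> K) (P : A -> Prop) :
  wqo P (fun x y => kf x = kf y).
Proof.
move=> f _; apply: NNPP => Hn.
pose h := fun i : 'I_#|K|.+1 => kf (f i).
have hinj : injective h.
  move=> x y hxy; apply: val_inj; apply: NNPP => /eqP nxy.
  apply: Hn; case: (ltngtP x y) => xy.
  - by exists x, y.
  - by exists y, x.
  - by move/eqP: nxy.
by have := leq_card h hinj; rewrite card_ord ltnn.
Qed.

Inductive hemb {A B} (R : A -> B -> Prop) : seq A -> seq B -> Prop :=
| hemb_nil t : hemb R [::] t
| hemb_skip s b t : hemb R s t -> hemb R s (b :: t)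
| hemb_cons a s b t : R a b -> hemb R s t -> hemb R (a :: s) (b :: t).

Fixpoint allP {A} (Q : A -> Prop) (s : seq A) : Prop :=
  match s with [::] => True | x :: s' => Q x /\ allP Q s' end.

Lemma hemb_trans A (R : A -> A -> Prop) : trans_rel R -> trans_rel (hemb R).
Proof.
move=> tR s t u Hst Htu; elim: Htu s Hst => {t u}.
- move=> u s H; inversion H; constructor.
- move=> t b u _ IH s H; apply: hemb_skip; exact: IH.
- move=> b t c u Rbc _ IH s H; inversion H; subst.
  + constructor.
  + apply: hemb_skip; exact: IH.
  + apply: hemb_cons; [exact: tR Rbc | exact: IH].
Qed.

Section Higman.
Variables (A : Type) (P : A -> Prop) (R : A -> A -> Prop).
Hypotheses (W : wqo P R) (tR : trans_rel R).

Definition Bad (p : seq (seq A)) := exists g : nat -> seq A,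
  [/\ forall n, allP P (g n), (forall i j, i < j -> ~ hemb R (g i) (g j)) &
      forall i, i < size p -> g i = nth [::] p i].

Lemma higman : wqo (allP P) (hemb R).
Proof.
move=> f Pf; apply: NNPP => Hbad.
have Bad0 : Bad [::].
  exists f; split => // i j ij H; apply: Hbad; by exists i, j.
have [mn Hmn] : exists mn : seq (seq A) -> seq A, forall p, Bad p ->
    Bad (rcons p (mn p)) /\ forall y, Bad (rcons p y) -> size (mn p) <= size y.
  apply: (choice_fun (Q := fun p x => Bad p -> Bad (rcons p x) /\
              forall y, Bad (rcons p y) -> size x <= size y)) => p.
  case: (classic (Bad p)) => Bp; last by exists [::].
  have ex : exists n, exists x, size x = n /\ Bad (rcons p x).
    case: Bp => g [g1 g2 g3]; exists (size (g (size p))), (g (size p)); split => //.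
    exists g; split => // i.
    rewrite size_rcons ltnS leq_eqVlt => /orP [/eqP->|ip].
      by rewrite nth_rcons ltnn eqxx.
    by rewrite nth_rcons ip; apply: g3.
  have [n [[x [sx Bx]] mnx]] := min_nat ex.
  exists x => _; split => // y By; rewrite sx; apply: mnx; by exists y.
pose pre := fun n => iter n (fun p => rcons p (mn p)) [::].
pose g := fun n => mn (pre n).
have spre : forall n, size (pre n) = n.
  by elim=> //= n IH; rewrite size_rcons IH.
have npre : forall n i, i < n -> nth [::] (pre n) i = g i.
  elim=> // n IH i; rewrite ltnS leq_eqVlt => /orP [/eqP->|].
    by rewrite /= nth_rcons spre ltnn eqxx.
  by move=> iN; rewrite /= nth_rcons spre iN IH.
have Bpre : forall n, Bad (pre n).
  elim=> // n IH; exact: (proj1 (Hmn _ IH)).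
have gbad : forall i j, i < j -> ~ hemb R (g i) (g j).
  move=> i j ij; have [h [h1 h2 h3]] := Bpre j.+1.
  rewrite -(npre j.+1 i) ?(leq_trans ij) // -(npre j.+1 j) // -!h3 ?spre //.
    exact: h2.
  exact: ltn_trans ij _.
have gP : forall n, allP P (g n).
  move=> n; have [h [h1 h2 h3]] := Bpre n.+1.
  by rewrite -(npre n.+1 n) // -h3 ?spre.
have gmin : forall n y, Bad (rcons (pre n) y) -> size (g n) <= size y.
  move=> n y; exact: (proj2 (Hmn _ (Bpre n))).
have [at_ Hat] : exists at_ : nat -> A * seq A, forall n, g n = (at_ n).1 :: (at_ n).2.
  apply: (choice_fun (Q := fun n p => g n = p.1 :: p.2)) => n.
  case E: (g n) => [|a t]; last by exists (a, t).
  exfalso; apply: (gbad n n.+1) => //; rewrite E; constructor.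
pose a := fun n => (at_ n).1. pose t := fun n => (at_ n).2.
have ClaimA : wqo (fun y => exists i, y = t i) (hemb R).
  move=> h Hh; have [sg Hsg] := choice_fun Hh.
  apply: NNPP => hbad.
  have [n0 [[k0 Ek0] n0min]] := min_nat (Q := fun n => exists k, sg k = n) (ex_intro _ (sg 0) (ex_intro _ 0 erefl)).
  pose F := fun i => if i < n0 then g i else h (k0 + (i - n0)).
  have : Bad (rcons (pre n0) (t n0)).
    exists F; split.
    - move=> i; rewrite /F; case: ifP => _; first exact: gP.
      rewrite Hsg; have := gP (sg (k0 + (i - n0))); by rewrite Hat => -[].
    - move=> i j ij; rewrite /F; case: ifP => i0; case: ifP => j0.
      + exact: gbad.
      + rewrite Hsg => Hm; apply: (gbad i (sg (k0 + (j - n0)))).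
          apply: (leq_trans i0); apply: n0min; by eexists.
        rewrite (Hat (sg _)); exact: hemb_skip.
      + by rewrite (ltn_trans ij j0) in i0.
      + move=> Hm; apply: hbad; exists (k0 + (i - n0)), (k0 + (j - n0)); split => //.
        rewrite ltn_add2l ltn_sub2rE //; by rewrite leqNgt i0.
    - move=> i; rewrite size_rcons spre ltnS leq_eqVlt => /orP [/eqP->|ip].
        by rewrite /F ltnn subnn addn0 nth_rcons spre ltnn eqxx Hsg Ek0.
      by rewrite /F ip nth_rcons spre ip npre.
  move/gmin; rewrite Hat /= ltnn.
  done.
have aP : forall n, P (a n).
  move=> n; have := gP n; rewrite Hat; by case.
have [phi [Hp Hc]] := wqo_chain W aP.
have [i [j [ij Hij]]] := ClaimA (fun k => t (phi k)) (fun k => ex_intro _ (phi k) erefl).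
apply: (gbad (phi i) (phi j) (incr_lt Hp ij)).
rewrite !Hat; apply: hemb_cons => //.
exact: (chain_trans (g := fun k => a (phi k)) tR Hc ij).
Qed.
End Higman.

Section TreeInd.
Variables (V : Type) (m : nat) (P : tree V m -> Prop).
Hypotheses (HL : forall v, P (Leaf v)) (HN : forall M cs, allP P cs -> P (Node M cs)).
Fixpoint tree_ind' (t : tree V m) : P t :=
  match t with
  | Leaf v => HL v
  | Node M cs => HN M ((fix go (l : seq (tree V m)) : allP P l :=
       match l with [::] => I | c :: l' => conj (tree_ind' c) (go l') end) cs)
  end.
End TreeInd.

Lemma has_allP A (p1 p2 : pred A) (Q : A -> Prop) cs : allP Q cs ->
  (forall c, Q c -> p1 c = p2 c) -> has p1 cs = has p2 cs.
Proof. elim: cs => //= c cs IH [Qc Qs] H; by rewrite H // IH. Qed.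

Lemma map_allP A B (f1 f2 : A -> B) cs : allP (fun c => f1 c = f2 c) cs -> map f1 cs = map f2 cs.
Proof. elim: cs => //= c cs IH [-> ?]; by rewrite IH. Qed.

Lemma allP_impl A (Q Q' : A -> Prop) cs : allP Q cs -> (forall c, Q c -> Q' c) -> allP Q' cs.
Proof. elim: cs => //= c cs IH [? ?] H; split; [exact: H | exact: IH]. Qed.

Section Shapes.
Variable k : nat.
Notation shape := (tree 'I_k k).

Definition kind (s : shape) : 'I_k + {ffun 'I_k * 'I_k -> bool} :=
  match s with Leaf a => inl a | Node M _ => inr [ffun p => M p.1 p.2] end.
Definition children (s : shape) := match s with Leaf _ => [::] | Node _ cs => cs end.

Fixpoint tembn (n : nat) (s t : shape) : Prop :=
  match n with 0 => False | n'.+1 =>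
   match s, t with
   | Leaf a, Leaf b => a = b
   | Node M cs, Node M' cs' => (forall a b, M a b = M' a b) /\ hemb (tembn n') cs cs'
   | _, _ => False end end.

Lemma tembn_trans n : trans_rel (tembn n).
Proof.
elim: n => [|n IH] [a|M cs] [b|M' cs'] [c|M'' cs''] //=.
- by move=> -> ->.
- move=> [H1 H2] [H3 H4]; split; first by move=> a b; rewrite H1 H3.
  exact: hemb_trans IH _ _ _ H2 H4.
Qed.

Lemma tembn_step n (Q : shape -> Prop) : wqo Q (tembn n) ->
  wqo (fun s => allP Q (children s)) (tembn n.+1).
Proof.
move=> W.
have W1 := wqo_fin kind (P := fun s => allP Q (children s)).
have W2 := wqo_map (higman W (@tembn_trans n)) (g := children) (fun x H => H).
have W3 := wqo_inter W1 (fun x y z (h1 : kind x = kind y) h2 => etrans h1 h2) W2.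
apply: (wqo_mono W3) => // -[a|M cs] [b|M' cs'] /= [E H]; try discriminate.
- by case: E.
- split => // x y; case: E => E; have := congr1 (fun F : {ffun _ -> bool} => F (x, y)) E; by rewrite /= !ffunE.
Qed.

Lemma depth_children d (s : shape) : depth s <= d.+1 ->
  allP (fun c => depth c <= d) (children s).
Proof.
case: s => //= M cs; rewrite ltnS; elim: cs => //= c cs IH.
by rewrite geq_max => /andP [-> /IH].
Qed.

Lemma wqo_depth d : wqo (fun s : shape => depth s <= d) (tembn d.+1).
Proof.
elim: d => [|d IH].
  have W0 : wqo (fun _ : shape => False) (tembn 0) by move=> f H; case: (H 0).
  apply: (wqo_mono (tembn_step W0)) => // -[a|M cs] //=.
by apply: (wqo_mono (tembn_step IH)) => // s /depth_children.
Qed.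
End Shapes.

Section Conv.
Variables (V W : eqType) (m m' : nat) (g : V -> W)
  (phi : ('I_m -> 'I_m -> bool) -> 'I_m' -> 'I_m' -> bool).

Fixpoint tconv (t : tree V m) : tree W m' :=
  match t with Leaf v => Leaf (g v) | Node M cs => Node (phi M) (map tconv cs) end.

Lemma leaves_tconv t : leaves (tconv t) = map g (leaves t).
Proof.
elim/tree_ind': t => // M cs IH /=.
rewrite map_flatten -map_comp; congr flatten; rewrite -map_comp.
exact: map_allP.
Qed.

Lemma depth_tconv t : depth (tconv t) = depth t.
Proof.
elim/tree_ind': t => // M cs IH /=; rewrite -map_comp; congr (foldr _ _ _).+1.
exact: map_allP.
Qed.

Lemma tadj_tconv (lamV : V -> 'I_m) (lamW : W -> 'I_m') : injective g ->
  (forall M u w, phi M (lamW (g u)) (lamW (g w)) = M (lamV u) (lamV w)) ->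
  forall t u w, tadj lamW (tconv t) (g u) (g w) = tadj lamV t u w.
Proof.
move=> ginj Hphi t; elim/tree_ind': t => // M cs IH u w /=.
have := leaves_tconv (Node M cs) => /= ->.
rewrite !mem_map // Hphi !has_map; congr orb.
  elim: cs IH {Hphi} => //= c cs IHc [H1 H2]; by rewrite IHc // leaves_tconv !mem_map // H1.
congr [&& _, _, ~~ _ & _]; apply: eq_has => c /=; by rewrite leaves_tconv !mem_map.
Qed.
End Conv.

Definition FL {V : eqType} {m} (cs : seq (tree V m)) := flatten (map (@leaves V m) cs).

Lemma hasF (V : eqType) m (cs : seq (tree V m)) x (p : pred (tree V m)) :
  (forall c, p c -> x \in leaves c) -> x \notin FL cs -> has p cs = false.
Proof.
move=> H; elim: cs => //= c cs IH; rewrite /FL /= mem_cat negb_or => /andP [h1 h2].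
rewrite IH // orbF; apply/negP => /H; by rewrite (negbTE h1).
Qed.

Definition HT {V : eqType} {m} (T : tree V m -> V -> V -> bool) cs x y :=
  has (fun c => [&& x \in leaves c, y \in leaves c & T c x y]) cs.

Section Emb.
Variables (V1 V2 : eqType) (m : nat).

Lemma HT_cons (T1 : tree V1 m -> V1 -> V1 -> bool) (T2 : tree V2 m -> V2 -> V2 -> bool)
  c1 cs1 c2 cs2 (fc fr : V1 -> V2) :
  uniq (leaves c1 ++ FL cs1) -> uniq (leaves c2 ++ FL cs2) ->
  (forall u, u \in leaves c1 -> fc u \in leaves c2) ->
  (forall u, u \in FL cs1 -> fr u \in FL cs2) ->
  (forall u w, u \in leaves c1 -> w \in leaves c1 -> T2 c2 (fc u) (fc w) = T1 c1 u w) ->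
  (forall u w, u \in FL cs1 -> w \in FL cs1 -> HT T2 cs2 (fr u) (fr w) = HT T1 cs1 u w) ->
  forall u w, u \in leaves c1 ++ FL cs1 -> w \in leaves c1 ++ FL cs1 ->
  HT T2 (c2 :: cs2) (if u \in leaves c1 then fc u else fr u) (if w \in leaves c1 then fc w else fr w)
  = HT T1 (c1 :: cs1) u w.
Proof.
rewrite !cat_uniq => /and3P [_ D1 _] /and3P [_ D2 _] Hc Hr Tc IH u w.
have D1' : forall x, x \in leaves c1 -> x \notin FL cs1.
  by move=> x xc; apply/negP => xr; move/hasP: D1; apply; exists x.
have D2' : forall x, x \in leaves c2 -> x \notin FL cs2.
  by move=> x xc; apply/negP => xr; move/hasP: D2; apply; exists x.
have D2'' : forall x, x \in FL cs2 -> x \notin leaves c2.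
  by move=> x xr; apply/negP => /D2'; rewrite xr.
rewrite !mem_cat /HT /= => hu hw.
case: ifP => uc; case: ifP => wc /=.
- rewrite !Hc // Tc // (hasF (x := fc u)) ?(hasF (x := u)) //; try by move=> c /and3P [].
    by apply: D1'.
  apply: D2'; exact: Hc.
- have wr : w \in FL cs1 by rewrite wc in hw.
  rewrite (hasF (x := fc u)) ?(hasF (x := u)) //; try by move=> c /and3P [].
  + by rewrite (negbTE (D2'' _ (Hr _ wr))) !andbF.

  + by apply: D1'.
  + apply: D2'; exact: Hc.
- have ur : u \in FL cs1 by rewrite uc in hu.
  rewrite (hasF (x := fc w)) ?(hasF (x := w)) //; try by move=> c /and3P [].
  + by rewrite (negbTE (D2'' _ (Hr _ ur))).
  + by apply: D1'.
  + apply: D2'; exact: Hc.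
- have ur : u \in FL cs1 by rewrite uc in hu.
  have wr : w \in FL cs1 by rewrite wc in hw.
  rewrite (negbTE (D2'' _ (Hr _ ur))) /=; have := IH u w ur wr; by rewrite /HT.
Qed.
Variables (lam1 : V1 -> 'I_m) (lam2 : V2 -> 'I_m) (x2 : V2).
Notation tm1 := (tconv lam1 (fun M : 'I_m -> 'I_m -> bool => M)).
Notation tm2 := (tconv lam2 (fun M : 'I_m -> 'I_m -> bool => M)).

Definition Inv (t1 : tree V1 m) (t2 : tree V2 m) (f : V1 -> V2) :=
  [/\ forall u, u \in leaves t1 -> f u \in leaves t2,
      {in leaves t1 &, injective f},
      forall u, u \in leaves t1 -> lam2 (f u) = lam1 u &
      forall u w, u \in leaves t1 -> w \in leaves t1 ->
        tadj lam2 t2 (f u) (f w) = tadj lam1 t1 u w].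

Definition LInv cs1 cs2 (f : V1 -> V2) :=
  [/\ forall u, u \in FL cs1 -> f u \in FL cs2,
      {in FL cs1 &, injective f},
      forall u, u \in FL cs1 -> lam2 (f u) = lam1 u,
      forall u w, u \in FL cs1 -> w \in FL cs1 ->
        HT (fun _ _ _ => true) cs2 (f u) (f w) = HT (fun _ _ _ => true) cs1 u w &
      forall u w, u \in FL cs1 -> w \in FL cs1 ->
        HT (tadj lam2) cs2 (f u) (f w) = HT (tadj lam1) cs1 u w].

Lemma list_emb n : (forall t1 t2, uniq (leaves t1) -> uniq (leaves t2) ->
     tembn n (tm1 t1) (tm2 t2) -> exists f, Inv t1 t2 f) ->
  forall S1 S2, hemb (tembn n) S1 S2 -> forall cs1 cs2, S1 = map tm1 cs1 -> S2 = map tm2 cs2 ->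
  uniq (FL cs1) -> uniq (FL cs2) -> exists f, LInv cs1 cs2 f.
Proof.
move=> IHn S1 S2; elim => {S1 S2}.
- move=> S2 [|c1 cs1] // cs2 _ _ _ _; by exists (fun _ => x2); split.
- move=> S1 b S2 _ IH cs1 [|c2 cs2] // E1 [Eb E2] U1.
  rewrite /FL /= -/(FL cs2) => U2; have U2' := U2; rewrite cat_uniq in U2'.
  case/and3P: U2' => _ D2 U2'.
  have D2'' : forall x, x \in FL cs2 -> x \notin leaves c2.
    move=> x xr; apply/negP => xc; move/hasP: D2; apply; by exists x.
  have [f [f1 f2 f3 f4 f5]] := IH cs1 cs2 E1 E2 U1 U2'.
  exists f; split => //.
  + move=> u /f1; rewrite /FL /= mem_cat orbC => ->; done.
  + move=> u w hu hw; rewrite /HT /= (negbTE (D2'' _ (f1 _ hu))) /=; exact: f4.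
  + move=> u w hu hw; rewrite /HT /= (negbTE (D2'' _ (f1 _ hu))) /=; exact: f5.
- move=> a S1 b S2 Rab _ IH [|c1 cs1] // [|c2 cs2] // [Ea E1] [Eb E2].
  rewrite /FL /= -/(FL cs1) -/(FL cs2) => U1 U2.
  have U1' := U1; have U2' := U2; rewrite cat_uniq in U1'; rewrite cat_uniq in U2'.
  case/and3P: U1' => Uc1 D1 Ur1; case/and3P: U2' => Uc2 D2 Ur2.
  have D1' : forall x, x \in leaves c1 -> x \notin FL cs1.
    by move=> x xc; apply/negP => xr; move/hasP: D1; apply; exists x.
  have D2' : forall x, x \in leaves c2 -> x \notin FL cs2.
    by move=> x xc; apply/negP => xr; move/hasP: D2; apply; exists x.
  have [fc [c1' c2' c3' c4']] := IHn c1 c2 Uc1 Uc2 ltac:(by rewrite -Ea -Eb).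
  have [fr [r1 r2 r3 r4 r5]] := IH cs1 cs2 E1 E2 Ur1 Ur2.
  exists (fun u => if u \in leaves c1 then fc u else fr u); split.
  + move=> u; rewrite !mem_cat; case: ifP => uc /=; first by rewrite c1'.
    by move=> ur; rewrite r1 ?orbT.
  + move=> u w; rewrite !mem_cat; case: ifP => uc; case: ifP => wc /= hu hw.
    * exact: c2'.
    * have wr := hw.
      move=> E; have := D2' _ (c1' _ uc); by rewrite E r1.
    * have ur := hu.
      move=> E; have := D2' _ (c1' _ wc); by rewrite -E r1.
    * have ur := hu.
      have wr := hw.
      exact: r2.
  + move=> u; rewrite mem_cat; case: ifP => uc /=; first by rewrite c3'.
    exact: r3.
  + apply: HT_cons => //; exact: r1.
  + apply: HT_cons => //; exact: r1.
Qed.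

Lemma hasT (V : eqType) (cs : seq (tree V m)) x y :
  has (fun c => (x \in leaves c) && (y \in leaves c)) cs = HT (fun _ _ _ => true) cs x y.
Proof. by rewrite /HT; apply: eq_has => c; rewrite andbT. Qed.

Lemma tree_emb n : forall t1 t2, uniq (leaves t1) -> uniq (leaves t2) ->
  tembn n (tm1 t1) (tm2 t2) -> exists f, Inv t1 t2 f.
Proof.
elim: n => // n IHn [u1|M cs1] [u2|M' cs2] //= U1 U2.
- move=> E; exists (fun _ => u2); split => //.
  + by move=> u _; rewrite inE.
  + by move=> x y; rewrite !inE => /eqP -> /eqP ->.
  + by move=> u; rewrite inE => /eqP ->.
- move=> [HM Hh]; have [f [f1 f2 f3 f4 f5]] := list_emb IHn Hh erefl erefl U1 U2.
  exists f; split => // u w hu hw /=.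
  change (HT (tadj lam2) cs2 (f u) (f w) || [&& f u \in FL cs2, f w \in FL cs2,
     ~~ has (fun c => (f u \in leaves c) && (f w \in leaves c)) cs2 & M' (lam2 (f u)) (lam2 (f w))]
   = HT (tadj lam1) cs1 u w || [&& u \in FL cs1, w \in FL cs1,
     ~~ has (fun c => (u \in leaves c) && (w \in leaves c)) cs1 & M (lam1 u) (lam1 w)]).
  by rewrite f5 // !f1 // !hasT f4 // !f3 // HM hu hw.
Qed.
End Emb.

Definition emb (H G : graph) (f : vert H -> vert G) :=
  injective f /\ forall x y, @adj H x y = @adj G (f x) (f y).

Section Induced.
Variables (G : graph) (P : pred (vert G)).
Definition ind_adj : rel {x : vert G | P x} := fun x y => @adj G (val x) (val y).
Lemma ind_sym : symmetric ind_adj. Proof. move=> x y; exact: adj_sym. Qed.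
Lemma ind_irr : irreflexive ind_adj. Proof. move=> x; exact: adj_irr. Qed.
Definition induced := @Graph _ ind_adj ind_sym ind_irr.
End Induced.

Definition del (G : graph) (w : vert G) := induced (fun x : vert G => x != w).

Lemma emb_val (G : graph) P : emb (fun x : vert (@induced G P) => val x).
Proof. split => //; exact: val_inj. Qed.

Lemma emb_comp (H G K : graph) (f : vert H -> vert G) (g : vert G -> vert K) :
  emb f -> emb g -> emb (fun x => g (f x)).
Proof.
move=> [fi fa] [gi ga]; split; first exact: inj_comp.
by move=> x y; rewrite fa ga.
Qed.

Lemma emb_id (G : graph) : emb (@id (vert G)).
Proof. by split => // x y. Qed.

Definition Bm (C : graph_class) (H : graph) := ~ C H /\ forall w : vert H, C (del w).

Lemma card_del (G : graph) (w : vert G) : #|vert (del w)| < #|vert G|.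
Proof.
rewrite /del /= card_sig.
have -> : #|[pred x | x != w]| = #|predC1 w| by apply: eq_card.
have : 0 < #|vert G| by apply/card_gt0P; exists w.
by rewrite cardC1; case: #|vert G|.
Qed.

Lemma minimal_sub (C : graph_class) : hereditary C -> forall G, ~ C G ->
  exists H (f : vert H -> vert G), Bm C H /\ emb f.
Proof.
move=> hC G; move: {2}#|vert G| (leqnn #|vert G|) => n; elim: n G => [|n IH] G Gn nC.
  exists G, id; split; last exact: emb_id.
  split => // w; exfalso; by move: (card_del w); rewrite ltnNge (leq_trans Gn).
case: (classic (forall w : vert G, C (del w))) => Hall.
  by exists G, id; split => //; exact: emb_id.
have [w nw] := not_all_ex_not _ _ Hall.
have sz : #|vert (del w)| <= n by rewrite -ltnS; exact: leq_trans (card_del w) Gn.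
have [H [f [BH ef]]] := IH (del w) sz nw.
by exists H, (fun x => val (f x)); split => //; exact: (emb_comp ef (@emb_val G (fun x => x != w))).
Qed.

Definition Model (H : graph) (d k : nat) (lam : vert H -> 'I_k) (t : tree (vert H) k) :=
  [/\ depth t <= d, uniq (leaves t), (forall x, x \in leaves t) &
      forall u w, u != w -> @adj H u w = tadj lam t u w].

Lemma ext_model (H : graph) (v : vert H) d m :
  has_tree_model (del v) d m -> exists lam t, @Model H d.+1 m.*2.+1 lam t.
Proof.
case=> lam' [t' [dep pe _ Hadj]].
pose H' := del v.
pose lamW := fun x : vert H => if (insub x : option (vert H')) is Some y then
   (inord (adj v x + (lam' y).*2) : 'I_m.*2.+1) else ord_max.
pose phi := fun (M : 'I_m -> 'I_m -> bool) (a b : 'I_m.*2.+1) =>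
  match (insub (a./2) : option 'I_m), (insub (b./2) : option 'I_m) with
  | Some x, Some y => M x y | _, _ => false end.
pose M0 := fun a b : 'I_m.*2.+1 => ((a == ord_max) && odd b) || ((b == ord_max) && odd a).
pose t'' := tconv (fun y : vert H' => val y) phi t'.
exists lamW, (Node M0 [:: t''; Leaf v]).
have bnd : forall (y : vert H') (b : bool), b + (lam' y).*2 < m.*2.
  move=> y b; have := ltn_ord (lam' y); rewrite -!muln2; case: b => /=; lia.
have lamWv : forall y : vert H', nat_of_ord (lamW (val y)) = adj v (val y) + (lam' y).*2.
  move=> y; rewrite /lamW valK inordK //; exact: ltnW (bnd _ _).
have lamWv' : lamW v = ord_max by rewrite /lamW insubF // eqxx.
have Hphi : forall M u w, phi M (lamW (val u)) (lamW (val w)) = M (lam' u) (lam' w).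
  by move=> M u w; rewrite /phi !lamWv !half_bit_double !valK.
have memT : forall x, (x \in map val (leaves t')) = (x != v).
  move=> x; case: (eqVneq x v) => [->|xv].
    by apply/mapP => -[y _ yv]; have := valP y; rewrite -yv eqxx.
  have -> : x = val (Sub x xv : vert H') by rewrite SubK.
  by rewrite mem_map ?(perm_mem pe) ?mem_enum //; exact: val_inj.
have ltd : forall y : vert H', lamW (val y) != ord_max.
  move=> y; apply/negP => /eqP /(congr1 (@nat_of_ord _)); rewrite lamWv /= => E.
  by have := bnd y (adj v (val y)); rewrite E ltnn.
have oddW : forall y : vert H', odd (lamW (val y)) = adj v (val y).
  by move=> y; rewrite lamWv oddD odd_double addbF oddb.
split.
- rewrite /= depth_tconv; by rewrite maxn0 ltnS geq_max dep.
- rewrite /= cat_uniq /t'' leaves_tconv /= andbT map_inj_uniq; last exact: val_inj.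
  by rewrite (perm_uniq pe) enum_uniq /= memT eqxx.
- move=> x; rewrite /= mem_cat /t'' leaves_tconv memT inE; by case: eqP.
move=> u w uw /=; rewrite /t'' !leaves_tconv !mem_cat !memT !inE /= orbF.
case: (eqVneq u v) => [Eu|uv]; case: (eqVneq w v) => [Ew|wv] /=.
- by rewrite Eu Ew eqxx in uw.
- have -> : w = val (Sub w wv : vert H') by rewrite SubK.
  by rewrite Eu lamWv' /M0 eqxx oddW (negbTE (ltd _)) andTb andFb orbF.
- have -> : u = val (Sub u uv : vert H') by rewrite SubK.
  by rewrite Ew lamWv' /M0 eqxx oddW (negbTE (ltd _)) andTb andFb adj_sym.
- have -> : u = val (Sub u uv : vert H') by rewrite SubK.
  have -> : w = val (Sub w wv : vert H') by rewrite SubK.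
  rewrite (tadj_tconv (lamV := lam')) //; last exact: val_inj.
  rewrite orbF -Hadj //; by rewrite orbF.
Qed.

Lemma bound (C : graph_class) : hereditary C -> bounded_shrubdepth C ->
  exists K, forall H, Bm C H -> #|vert H| <= K.
Proof.
move=> hC [d [m Hm]].
apply: NNPP => nb.
have ex : forall K, exists H, Bm C H /\ K < #|vert H|.
  move=> K; apply: NNPP => h; apply: nb; exists K => H BH; rewrite leqNgt; apply/negP => lt.
  by apply: h; exists H.
have [pick Hpick] := choice_fun ex.
pose hg := fix hg k := match k with 0 => pick 0 | k'.+1 => pick #|vert (hg k')| end.
have hB : forall k, Bm C (hg k) by case=> [|k]; exact: (proj1 (Hpick _)).
have hinc : forall k, #|vert (hg k)| < #|vert (hg k.+1)| by move=> k; exact: (proj2 (Hpick _)).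
have hpos : forall k, 0 < #|vert (hg k)|.
  case=> [|k]; first exact: (proj2 (Hpick 0)).
  exact: leq_ltn_trans (leq0n _) (hinc k).
have hel : forall k, exists v : vert (hg k), True.
  by move=> k; have /card_gt0P [v _] := hpos k; exists v.
pose k' := m.*2.+1.
pose Spec := fun (H : graph) (s : tree 'I_k' k') => exists lam t,
  s = tconv lam (fun M : 'I_k' -> 'I_k' -> bool => M) t /\ @Model H d.+1 k' lam t.
have hS : forall k, exists s, depth s <= d.+1 /\ Spec (hg k) s.
  move=> k; have [v _] := hel k.
  have := Hm _ ((proj2 (hB k)) v) => /ext_model [lam [t Mt]].
  exists (tconv lam (fun M : 'I_k' -> 'I_k' -> bool => M) t); split; last by exists lam, t.
  rewrite depth_tconv; by case: Mt.
have [sq Hsq] := choice_fun hS.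
have [i [j [ij Hij]]] := @wqo_depth k' d.+1 sq (fun k => proj1 (Hsq k)).
have [lam1 [t1 [E1 [_ U1 A1 J1]]]] := proj2 (Hsq i).
have [lam2 [t2 [E2 [_ U2 A2 J2]]]] := proj2 (Hsq j).
have [x2 _] := hel j.
rewrite E1 E2 in Hij.
have [f [f1 f2 f3 f4]] := tree_emb x2 U1 U2 Hij.
have finj : injective f by move=> a b; exact: f2 (A1 a) (A1 b).
have fadj : forall x y, @adj (hg i) x y = @adj (hg j) (f x) (f y).
  move=> x y; case: (eqVneq x y) => [->|xy]; first by rewrite !adj_irr.
  have fxy : f x != f y by rewrite (inj_eq finj).
  by rewrite J1 // J2 // f4 ?A1.
have sz : #|vert (hg i)| < #|vert (hg j)|.
  exact: (incr_lt (phi := fun k => #|vert (hg k)|) hinc ij).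
have [w wn] : exists w, w \notin codom f.
  apply: NNPP => h.
  have all : forall w, w \in codom f.
    move=> w; apply: NNPP => /negP h'; apply: h; by exists w.
  have : #|vert (hg j)| <= #|vert (hg i)|.
    rewrite -(card_codom finj); apply: subset_leq_card; apply/subsetP => z _; exact: all.
  by rewrite leqNgt sz.
have ne : forall x, f x != w.
  by move=> z; apply: contraNneq wn => <-; exact: codom_f.
pose g := fun z => (exist _ (f z) (ne z) : vert (del w)).
have ginj : injective g.
  by move=> z1 z2 /(congr1 val) /= /finj.
have : C (hg i).
  apply: (hC (del w) (hg i) g ginj _ (proj2 (hB j) w)) => a b; exact: fadj.
exact: (proj1 (hB i)).
Qed.

Lemma onth_some T (x0 : T) s i : i < size s -> onth s i = Some (nth x0 s i).
Proof. by move=> h; rewrite onthE (nth_map x0). Qed.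

Lemma sat_iterAll (G : graph) n p : forall env : seq (vert G),
  sat env (iter n FAll p) <-> forall e, size e = n -> sat (e ++ env) p.
Proof.
elim: n => [|n IH] env /=.
  split; first by move=> H [|] //. by move=> H; exact: (H [::]).
split.
- move=> H e; case/lastP: e => [|e x] //; rewrite size_rcons => -[se].
  rewrite cat_rcons; exact: (proj1 (IH (x :: env)) (H x) e se).
- move=> H x; apply/IH => e se; rewrite -cat_rcons; apply: H; by rewrite size_rcons se.
Qed.

Lemma closed_iterAll n k p : closed_at k (iter n FAll p) = closed_at (n + k) p.
Proof. by elim: n k => //= n IH k; rewrite IH addnS. Qed.

Definition FTrue := FEq 0 0.
Definition FFalse := FNot FTrue.
Definition lit (f : formula) (b : bool) := if b then f else FNot f.

Definition exP {A} (Q : A -> Prop) (s : seq A) := exists2 x, Q x & List.In x s.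

Lemma sat_and (G : graph) (env : seq (vert G)) b l :
  sat env (foldr FAnd b l) <-> sat env b /\ allP (sat env) l.
Proof. elim: l => /= [|f l IH]; first by split => [|[]]. rewrite IH; tauto. Qed.

Lemma sat_or (G : graph) (env : seq (vert G)) b l :
  sat env (foldr FOr b l) <-> sat env b \/ exists2 f, List.In f l & sat env f.
Proof.
elim: l => /= [|f l IH].
  split; first by left.
  by case => [//|[g []]].
rewrite IH; split.
- case=> [h|[h|[g g1 g2]]].
  + by right; exists f; [left|].
  + by left.
  + by right; exists g; [right|].
- case=> [h|[g [<-|g1] g2]].
  + by right; left.
  + by left.
  + by right; right; exists g.
Qed.

Lemma allP_map A B (Q : B -> Prop) (g : A -> B) s :
  allP Q (map g s) <-> forall x, List.In x s -> Q (g x).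
Proof.
elim: s => /= [|x s IH]; first by split.
rewrite IH; split; first by case=> h1 h2 y [<-|/h2].
by move=> h; split => [|y hy]; apply: h; [left|right].
Qed.

Lemma In_mem (T : eqType) (x : T) s : List.In x s <-> x \in s.
Proof.
elim: s => //= y s IH; rewrite in_cons IH; split.
- by case=> [->|->]; rewrite ?eqxx ?orbT.
- by case/orP => [/eqP ->|]; [left|right].
Qed.

Lemma closed_foldr (F : formula -> formula -> formula) n b A (g : A -> formula) s :
  (forall f1 f2, closed_at n (F f1 f2) = closed_at n f1 && closed_at n f2) ->
  closed_at n b -> (forall x, closed_at n (g x)) -> closed_at n (foldr F b (map g s)).
Proof. move=> HF hb hg; elim: s => //= x s IH; by rewrite HF hg IH. Qed.

Section FO.
Variable N : nat.
Hypothesis N0 : 0 < N.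

Definition atype := {ffun 'I_N * 'I_N -> bool * bool}.

Definition oadj (G : graph) (env : seq (vert G)) i j :=
  match onth env i, onth env j with Some x, Some y => @adj G x y | _, _ => false end.

Definition atp (G : graph) (env : seq (vert G)) : atype :=
  [ffun p : 'I_N * 'I_N => (onth env p.1 == onth env p.2, oadj env p.1 p.2)].

Definition diag (t : atype) : formula :=
  foldr FAnd FTrue [seq FAnd (lit (FEq (val p.1) (val p.2)) (t p).1) (lit (FAdj (val p.1) (val p.2)) (t p).2)
                   | p : 'I_N * 'I_N <- enum {: 'I_N * 'I_N}].

Lemma closed_diag t : closed_at N (diag t).
Proof.
apply: closed_foldr => //=; first by rewrite N0.
by move=> p; rewrite /lit; case: (t p).1; case: (t p).2; rewrite /= !ltn_ord.
Qed.

Lemma sat_diag (G : graph) (env : seq (vert G)) t : size env = N ->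
  sat env (diag t) <-> atp env = t.
Proof.
move=> se.
have hs : forall i : 'I_N, exists x, onth env i = Some x.
  move=> i; case: env se => [|x0 e] se; first by have := ltn_ord i; rewrite -{2}se.
  by exists (nth x0 (x0 :: e) i); apply: onth_some; rewrite se.
rewrite sat_and allP_map; split.
- move=> [_ H]; apply/ffunP => p; rewrite ffunE.
  have [h1 h2] := H p (proj2 (In_mem _ _) (mem_enum _ p)).
  have [x hx] := hs p.1; have [y hy] := hs p.2.
  move: h1 h2; rewrite /lit; case: (t p) => b1 b2 /= h1 h2.
  have e1 : (Some x == Some y) = b1.
    case: b1 h1 => /= h1; rewrite hx hy in h1; [by rewrite h1 eqxx | by apply/eqP => -[/h1]].
  have e2 : adj x y = b2.
    case: b2 h2 => /= h2; rewrite hx hy in h2; [exact: h2 | by apply/negP].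
  by rewrite /oadj hx hy e1 e2.
- move=> <-; split.
    have [x hx] := hs (Ordinal N0); move: hx; rewrite /FTrue /=; by move=> ->.
  move=> p _; have [x hx] := hs p.1; have [y hy] := hs p.2.
  rewrite ffunE /oadj /lit hx hy /=; split.
  + case: eqP => [[E]|ne] /=; rewrite hx hy //.
    by move=> E; apply: ne; rewrite E.
  + case: (boolP (adj x y)) => h /=; rewrite hx hy //.
    by apply/negP.
Qed.
End FO.

Definition voidg := @Graph void (fun _ _ => false) (fun _ _ => erefl) (fun _ => erefl).
Definition ind (G : graph) (env : seq (vert G)) := induced (fun x : vert G => x \in env).

Lemma In_map A B (g : A -> B) x s : List.In x s -> List.In (g x) (map g s).
Proof. elim: s => //= y s IH [->|h]; [by left | right; exact: IH]. Qed.

Lemma In_map_inv A B (g : A -> B) y s : List.In y (map g s) -> exists x, List.In x s /\ y = g x.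
Proof.
elim: s => //= x s IH [<-|/IH [z [h ->]]]; first by exists x; split => //; left.
by exists z; split => //; right.
Qed.

Lemma iso_atp N (N0 : 0 < N) (G G' : graph) (env : seq (vert G)) (env' : seq (vert G')) :
  size env = N -> size env' = N -> atp N env = atp N env' ->
  exists g : vert (ind env) -> vert (ind env'), emb g.
Proof.
case: env' => [|y0 e']; first by move=> _ /= E; rewrite -E in N0.
set env' := y0 :: e' => se se' E.
have hm : forall x : vert (ind env), index (val x) env < N.
  by move=> x; rewrite -se index_mem; exact: (valP x).
have hm' : forall x : vert (ind env), nth y0 env' (index (val x) env) \in env'.
  by move=> x; apply: mem_nth; rewrite se'.
pose g := fun x : vert (ind env) => (exist (fun z => z \in env') _ (hm' x) : vert (ind env')).
have on1 : forall x : vert (ind env), onth env (index (val x) env) = Some (val x).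
  by move=> x; rewrite (onth_some (val x)) ?nth_index ?(valP x) // se.
have on2 : forall x : vert (ind env), onth env' (index (val x) env) = Some (nth y0 env' (index (val x) env)).
  by move=> x; rewrite (onth_some y0) // se'.
have Ec : forall x y : vert (ind env),
   (onth env (index (val x) env) == onth env (index (val y) env)) =
   (onth env' (index (val x) env) == onth env' (index (val y) env)) /\
   oadj env (index (val x) env) (index (val y) env) = oadj env' (index (val x) env) (index (val y) env).
  move=> x y; have := congr1 (fun F : atype N => F (Ordinal (hm x), Ordinal (hm y))) E.
  by rewrite !ffunE /= => -[-> ->].
exists g; split.
- move=> x y /(congr1 val) /= e; apply: val_inj.
  have [c1 _] := Ec x y; move: c1; rewrite on1 on1 on2 on2 e eqxx.
  by move/eqP => [].
- move=> x y; have [_ c2] := Ec x y; move: c2; rewrite /oadj on1 on1 on2 on2 /=.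
  by move=> c; exact: c.
Qed.

Theorem corollary3p19 (C : graph_class) :
  hereditary C -> bounded_shrubdepth C ->
  exists phi : formula, sentence phi /\ (forall G : graph, C G <-> models G phi).
Proof.
move=> hC hb; have [K HK] := bound hC hb.
pose N := K.+1; have N0 : 0 < N by [].
pose Sb := fun t : atype N => exists (G : graph) (env : seq (vert G)),
  [/\ size env = N, atp N env = t & C (ind env)].
pose asb := fun P : Prop => if excluded_middle_informative P then true else false.
have asbP : forall P, asb P -> P by move=> P; rewrite /asb; case: excluded_middle_informative.
have asbT : forall P : Prop, P -> asb P by move=> P p; rewrite /asb; case: excluded_middle_informative.
pose psi := foldr FOr FFalse [seq diag t | t <- [seq t <- enum {: atype N} | asb (Sb t)]].
case: (classic (C voidg)) => Cv; last first.
  exists (FEx FFalse); split => // G; split => [CG|[x /= h]]; last by exfalso; apply: h.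
  exfalso; apply: Cv.
  apply: (hC G voidg (fun x : void => match x with end)) => //; by case.
exists (iter N FAll psi); split.
  rewrite /sentence closed_iterAll addn0; apply: closed_foldr => //; exact: closed_diag.
move=> G; rewrite /models sat_iterAll; split.
- move=> CG e se; rewrite cats0; apply/sat_or; right; exists (diag (atp N e)).
    apply: In_map; apply/In_mem; rewrite mem_filter mem_enum andbT; apply: asbT.
    exists G, e; split => //.
    exact: (hC G (ind e) (fun x => val x) val_inj (fun x y => erefl) CG).
  exact/sat_diag.
move=> H; apply: NNPP => nCG.
have [Hm [f [[nCH Hdel] [finj fadj]]]] := minimal_sub hC nCG.
have szH : #|vert Hm| <= K := HK _ (conj nCH Hdel).
case: (posnP #|vert Hm|) => [H0|Hpos].
  have nx : vert Hm -> False.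
    move=> x; suff : 0 < #|vert Hm| by rewrite H0.
    by apply/card_gt0P; exists x.
  apply: nCH; exact: (hC voidg Hm (fun x => False_rect void (nx x)) (fun x => False_rect _ (nx x)) (fun x => False_rect _ (nx x)) Cv).
have [h0 _] : exists h0 : vert Hm, True by have /card_gt0P [v _] := Hpos; exists v.
pose env := map f (enum (vert Hm)) ++ nseq (N - #|vert Hm|) (f h0).
have sz : size env = N by rewrite size_cat size_map -cardT size_nseq subnKC // ltnW.
have := H env sz; rewrite cats0 => /sat_or; case => [F | [fm fin hd]]; last first.
  have [t [tin Efm]] := In_map_inv fin; subst fm.
move/In_mem: tin; rewrite mem_filter => /andP [/asbP [G' [env' [se' Et Cenv']]] _].
move/(sat_diag N0 _ sz): hd => Ee.
have [g eg] := iso_atp N0 sz se' (etrans Ee (esym Et)).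
have Cenv : C (ind env) by case: eg => gi ga; exact: (hC _ _ g gi ga Cenv').
have inenv : forall h, f h \in env.
  by move=> h; rewrite /env mem_cat map_f ?mem_enum.
pose gg := fun h => (exist (fun z => z \in env) _ (inenv h) : vert (ind env)).
apply: nCH; apply: (hC (ind env) Hm gg _ _ Cenv).
  by move=> x y /(congr1 val) /= /finj.
by move=> x y; rewrite fadj.
have [x hx] : exists x, onth env 0 = Some x by exists (nth (f h0) env 0); apply: onth_some; rewrite sz.
apply: F; rewrite /FTrue; by rewrite hx.
Qed.
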